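(* Let $n,m\ge 1$, let $R\in\mathbb{R}^{2n\times 2n}$ be symmetric, $C\in\mathbb{R}^{2m\times 2n}$, $\Sigma\in\mathbb{R}^{2m\times 2m}$ real symplectic, and consider the linear system with $A=\mathbb{J}_{2n}R-\tfrac12 C^{\sharp}C$, $B=-C^{\sharp}\Sigma$, output matrix $C$, $D=\Sigma$ (state $x\in\mathbb{R}^{2n}$). Let $\tilde{\mathcal{O}}=\begin{pmatrix}C\\ C(\mathbb{J}_{2n}R)\\ \vdots\\ C(\mathbb{J}_{2n}R)^{2n-1}\end{pmatrix}\in\mathbb{R}^{4nm\times 2n}$, and let $\tilde{\mathcal{O}}=QEZ^{-1}$ be a factorization with $Q\in\mathbb{R}^{4nm\times 4nm}$ orthogonal, $Z\in\mathbb{R}^{2n\times 2n}$ real symplectic, and $$E=\begin{pmatrix}\Xi_k&0&0&0&0&0\\ 0&I_l&0&0&0&0\\ 0&0&0&\Xi_k&0&0\\ 0&0&0&0&0&0\end{pmatrix}\in\mathbb{R}^{4nm\times 2n},$$ with column blocks of widths $k,l,n-k-l,k,l,n-k-l$, row blocks of heights $k,l,k,4nm-2k-l$, and $\Xi_k=\operatorname{diag}(\xi_1,\dots,\xi_k)$ with all $\xi_i>0$; and let $V=Z^{-1}$ (this $V$ is real symplectic and puts the system in the Kalman-like canonical form described below, with these integers $k,l$). Let $X\in\mathbb{R}^{4nm\times 4nm}$ be invertible and $Y\in\mathbb{R}^{2n\times 2n}$ real symplectic such that $$XEY=\begin{pmatrix}\Xi'_k&0&0&0&0&0\\ 0&\Xi'_l&0&0&0&0\\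 0&0&0&\Xi''_k&0&0\\ 0&0&0&0&0&0\end{pmatrix}$$ (same block sizes as $E$), where $\Xi'_k,\Xi''_k\in\mathbb{R}^{k\times k}$ and $\Xi'_l\in\mathbb{R}^{l\times l}$ are diagonal with all diagonal entries nonzero. Then $V'=Y^{-1}V$ also puts the system in the Kalman-like canonical form, i.e. $V'$ is real symplectic and, writing $\hat x=V'x=(\hat q_a,\hat q_b,\hat q_c,\hat p_a,\hat p_b,\hat p_c)$ with blocks of sizes $k,l,n-k-l,k,l,n-k-l$: the entries of $\hat q_a,\hat p_a$ are controllable and observable; the entries of $\hat p_b$ are controllable but unobservable; the entries of $\hat q_b$ are uncontrollable but observable; the entries of $\hat q_c,\hat p_c$ are uncontrollable and unobservable; and $\hat A=V'AV'^{-1}$, $\hat B=V'B$, $\hat C=CV'^{-1}$ have, with respect to this block partition, the form $$\hat A=\begin{pmatrix} * & * & 0 & * & 0 & 0\\ 0 & * & 0 & 0 & 0 & 0\\ 0 & * & * & 0 & 0 & *\\ * & * & 0 & * & 0 & 0\\ * & * & * & * & * & *\\ 0 & * & * & 0 & 0 & * \end{pmatrix},\quad \hat B=\begin{pmatrix}*\\0\\0\\ *\\ *\\0\end{pmatrix},\quad \hat C=\begin{pmatrix}* & * & 0 & * & 0 & 0\end{pmatrix},$$ where $*$ denotes blocks that are arbitrary real matrices of compatible sizes.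
   Context: $\mathbb{J}_{2k}=\begin{pmatrix}0_{k\times k}& I_k\\ -I_k & 0_{k\times k}\end{pmatrix}$. For a real $2r\times 2s$ matrix $X$, $X^{\sharp}=-\mathbb{J}_{2s}X^{\top}\mathbb{J}_{2r}$. A real $2k\times 2k$ matrix $T$ is symplectic if $TT^{\sharp}=T^{\sharp}T=I_{2k}$, equivalently $T^{\top}\mathbb{J}_{2k}T=\mathbb{J}_{2k}$. (A factorization $\tilde{\mathcal{O}}=QEZ^{-1}$ of the stated type always exists.) For a linear system with matrices $(A,B,C)$ and $2n$-dimensional state, the controllability matrix is $\mathcal{C}=(B\;AB\;\cdots\;A^{2n-1}B)$ and the observability matrix is $\mathcal{O}=(C^{\top}\;(CA)^{\top}\;\cdots\;(CA^{2n-1})^{\top})^{\top}$; the controllable subspace is $\operatorname{Im}\mathcal{C}$, the unobservable subspace is $\operatorname{Ker}\mathcal{O}$, the uncontrollable subspace is the orthogonal complement of $\operatorname{Im}\mathcal{C}$ in $\mathbb{R}^{2n}$, and the observable subspace is the orthogonal complement of $\operatorname{Ker}\mathcal{O}$. For the transformed system $(\hat A,\hat B,\hat C)$, the $i$-th transformed coordinate is called controllable (resp. uncontrollable, observable, unobservable) if the standard basis vector $e_i$ lies in the corresponding subspace of the transformed system. *)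

(* Defs.v *)
From HB Require Import structures.
From mathcomp Require Import all_boot all_order all_algebra.
From mathcomp Require Import reals.
Set Implicit Arguments. Unset Strict Implicit. Unset Printing Implicit Defensive.
Import Order.TTheory GRing.Theory Num.Theory.
Local Open Scope ring_scope.

Section Defs.
Variable R : realType.

Definition Jmx (k : nat) : 'M[R]_(k + k) :=
  block_mx 0 1%:M (- 1%:M) 0.

Definition sharp (r s : nat) (X : 'M[R]_(r + r, s + s)) : 'M[R]_(s + s, r + r) :=
  - (Jmx s *m X^T *m Jmx r).

Definition symplectic (k : nat) (T : 'M[R]_(k + k)) : Prop :=
  T *m sharp T = 1%:M /\ sharp T *m T = 1%:M.

Definition orthogonal_mx (N : nat) (Q : 'M[R]_N) : Prop := Q^T *m Q = 1%:M.

Definition ctrbmx (N p : nat) (A : 'M[R]_N) (B : 'M[R]_(N, p)) :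
  'M[R]_(N, \sum_(i < N) p) := \mxrow_(i < N) (A ^+ i *m B).

Definition obsvmx (N q : nat) (A : 'M[R]_N) (C : 'M[R]_(q, N)) :
  'M[R]_(\sum_(i < N) q, N) := \mxcol_(i < N) (C *m A ^+ i).

Definition in_controllable (N p : nat) (A : 'M[R]_N) (B : 'M[R]_(N, p))
  (v : 'cV[R]_N) : Prop := exists w : 'cV[R]_(\sum_(i < N) p), v = ctrbmx A B *m w.
Definition in_uncontrollable (N p : nat) (A : 'M[R]_N) (B : 'M[R]_(N, p))
  (v : 'cV[R]_N) : Prop := forall w : 'cV[R]_(\sum_(i < N) p), v^T *m (ctrbmx A B *m w) = 0.
Definition in_unobservable (N q : nat) (A : 'M[R]_N) (C : 'M[R]_(q, N))
  (v : 'cV[R]_N) : Prop := obsvmx A C *m v = 0.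
Definition in_observable (N q : nat) (A : 'M[R]_N) (C : 'M[R]_(q, N))
  (v : 'cV[R]_N) : Prop := forall w : 'cV[R]_N, obsvmx A C *m w = 0 -> v^T *m w = 0.

Definition evec (N : nat) (i : 'I_N) : 'cV[R]_N := delta_mx i 0.

(* block-structured matrix
   [[D1,0,0,0,0,0],[0,D2,0,0,0,0],[0,0,0,D3,0,0],[0,0,0,0,0,0]]
   column blocks k,l,n-k-l,k,l,n-k-l ; row blocks k,l,k,M-2k-l ;
   D1 = diag(d1 0..d1 (k-1)), D2 = diag(d2 0..), D3 = diag(d3 0..). *)
Definition kalmanE (n M k l : nat) (d1 d2 d3 : nat -> R) : 'M[R]_(M, n + n) :=
  \matrix_(i < M, j < n + n)
    if (i < k)%N then (if (j == i :> nat) then d1 i else 0)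
    else if (i < k + l)%N then (if (j == i :> nat) then d2 (i - k)%N else 0)
    else if (i < k + l + k)%N then
      (if (j == n + (i - (k + l)) :> nat)%N then d3 (i - (k + l))%N else 0)
    else 0.

End Defs.

Arguments Jmx {R} k.
Arguments kalmanE {R} n M k l d1 d2 d3.
Arguments evec {R N} i.

Inductive part := Qa | Qb | Qc | Pa | Pb | Pc.

Definition blk (n k l i : nat) : part :=
  if (i < n)%N then
    (if (i < k)%N then Qa else if (i < k + l)%N then Qb else Qc)
  else
    (if (i - n < k)%N then Pa else if (i - n < k + l)%N then Pb else Pc).

Definition zeroA (r c : part) : bool :=
  match r, c with
  | Qa, (Qc | Pb | Pc) => true
  | Pa, (Qc | Pb | Pc) => true
  | Qb, Qb => false
  | Qb, _ => true
  | Qc, (Qa | Pa | Pb) => true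
  | Pc, (Qa | Pa | Pb) => true
  | _, _ => false
  end.

Definition zeroB (r : part) : bool :=
  match r with Qb | Qc | Pc => true | _ => false end.

Definition zeroC (c : part) : bool :=
  match c with Qc | Pb | Pc => true | _ => false end.

(* Main.v *)
Require Import Defs.
From HB Require Import structures.
From mathcomp Require Import all_boot all_order all_algebra.
From mathcomp Require Import reals.
From mathcomp Require Import zify.
Import Order.TTheory GRing.Theory Num.Theory.
Local Open Scope ring_scope.

Set Implicit Arguments. Unset Strict Implicit. Unset Printing Implicit Defensive.

Definition swp n (i : 'I_(n + n)) : 'I_(n + n) :=
  match split i with inl a => rshift n a | inr b => lshift n b end.

Lemma swp_val n (i : 'I_(n + n)) :
  val (swp i) = if (i < n)%N then (i + n)%N else (i - n)%N.
Proof.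
rewrite /swp; case: splitP => [a ->|b ->] /=.
  by rewrite addnC.
by rewrite addKn.
Qed.

Lemma swp_lt n (i : 'I_(n + n)) : (swp i < n)%N = ~~ (i < n)%N.
Proof.
rewrite swp_val; case: ifP => h.
  by rewrite ltnNge leq_addl.
have := ltn_ord i; rewrite ltnNge in h; move/negbFE: h => h hi.
by rewrite ltn_subLR // hi.
Qed.

Lemma swpK n : involutive (@swp n).
Proof.
move=> i; apply: val_inj; rewrite swp_val swp_lt; case: ifP => h /=.
  by rewrite swp_val (negbTE h) subnK // leqNgt.
by rewrite swp_val (negbFE h) addnK.
Qed.

Lemma swp_eq n (i j : 'I_(n + n)) : (i == swp j) = (swp i == j).
Proof.
apply/eqP/eqP => [->|<-]; by rewrite swpK.
Qed.

Section J.
Variable R : realType.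

Lemma JmxE n (i k : 'I_(n + n)) :
  Jmx n i k = if (i < n)%N then (k == swp i)%:R else - (k == swp i)%:R :> R.
Proof.
rewrite /Jmx /swp.
have sl : forall a : 'I_n, split (lshift n a) = inl a by move=> a; exact: (unsplitK (inl a)).
have sr : forall a : 'I_n, split (rshift n a) = inr a by move=> a; exact: (unsplitK (inr a)).
rewrite -[i]splitK -[k]splitK.
case: (split i) => a; case: (split k) => b /=;
  rewrite ?block_mxEul ?block_mxEur ?block_mxEdl ?block_mxEdr ?sl ?sr ?mxE /=.
- rewrite ltn_ord; case: eqP => // /(congr1 val) /= h.
  by have := ltn_ord b; rewrite h ltnNge leq_addr.
- by rewrite ltn_ord eq_rshift eq_sym.
- by rewrite ltnNge leq_addr /= eq_lshift eq_sym.
- rewrite ltnNge leq_addr /= ; case: eqP; rewrite ?oppr0 // => /(congr1 val) /= h.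
  by have := ltn_ord a; rewrite -h ltnNge leq_addr.
Qed.

Lemma mulJmx n p (M : 'M[R]_(n + n, p)) i j :
  (Jmx n *m M) i j = if (i < n)%N then M (swp i) j else - M (swp i) j.
Proof.
rewrite mxE (bigD1 (swp i)) //= big1 => [|k hk].
  by rewrite addr0 JmxE eqxx; case: ifP => _; rewrite ?mul1r ?mulN1r.
by rewrite JmxE (negbTE hk); case: ifP => _; rewrite ?oppr0 mul0r.
Qed.

Lemma mulmxJ n p (M : 'M[R]_(p, n + n)) i j :
  (M *m Jmx n) i j = if (j < n)%N then - M i (swp j) else M i (swp j).
Proof.
rewrite mxE (bigD1 (swp j)) //= big1 => [|k hk].
  by rewrite addr0 JmxE swp_lt swpK eqxx; case: (j < n)%N => /=; rewrite ?mulr1 ?mulrN1.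
by rewrite JmxE swp_eq eq_sym (negbTE hk); case: ifP => _; rewrite ?oppr0 mulr0.
Qed.

Lemma JJ n : Jmx n *m Jmx n = - 1%:M :> 'M[R]_(n + n).
Proof.
apply/matrixP => i j; rewrite mulJmx JmxE swp_lt swpK !mxE eq_sym.
by case: (i < n)%N.
Qed.

Lemma Jtr n : (Jmx n)^T = - Jmx n :> 'M[R]_(n + n).
Proof.
apply/matrixP => i j.
have E : forall (M : 'M[R]_(n + n)) a b, (- M) a b = - M a b by move=> *; rewrite mxE.
have T : forall (M : 'M[R]_(n + n)) a b, M^T a b = M b a by move=> *; rewrite mxE.
rewrite E T !JmxE swp_eq.
case: (boolP (swp i == j)) => [/eqP <-|h]; last first.
  by rewrite [j == _]eq_sym (negbTE h); case: (j < n)%N; case: (i < n)%N; rewrite /= ?mulr0n ?oppr0.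
by rewrite swp_lt eqxx; case: (i < n)%N; rewrite /= ?mulr1n ?opprK.

Qed.

Lemma Jtr_mul n p (M : 'M[R]_(p, n + n)) : M *m (Jmx n)^T = - (M *m Jmx n).
Proof. by rewrite Jtr mulmxN. Qed.

Lemma sharpE r s (X : 'M[R]_(r + r, s + s)) : sharp X = - (Jmx s *m X^T *m Jmx r).
Proof. by []. Qed.

Lemma sharpK r s (X : 'M[R]_(r + r, s + s)) : sharp (sharp X) = X.
Proof.
rewrite !sharpE linearN /= !trmx_mul !Jtr trmxK.
rewrite ?(mulmxN, mulNmx, opprK) !mulmxA JJ mulNmx mul1mx -!mulmxA JJ mulmxN mulmx1.
by rewrite opprK.
Qed.

Lemma sharp_mul r s t (X : 'M[R]_(r + r, s + s)) (Y : 'M[R]_(s + s, t + t)) :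
  sharp (X *m Y) = sharp Y *m sharp X.
Proof.
rewrite !sharpE trmx_mul mulmxN mulNmx opprK !mulmxA.
by rewrite -[Jmx t *m Y^T *m Jmx s *m Jmx s]mulmxA JJ mulmxN mulmx1 !mulNmx.
Qed.

Lemma sharpN r s (X : 'M[R]_(r + r, s + s)) : sharp (- X) = - sharp X.
Proof. by rewrite !sharpE linearN /= mulmxN mulNmx. Qed.

Lemma sym_unit k (T : 'M[R]_(k + k)) : symplectic T -> T \in unitmx.
Proof. by case=> h _; case: (mulmx1_unit h). Qed.

Lemma sym_inv k (T : 'M[R]_(k + k)) : symplectic T -> invmx T = sharp T.
Proof.
move=> hT; have hu := sym_unit hT; case: hT => h1 _.
by rewrite -[sharp T]mul1mx -(mulVmx hu) -mulmxA h1 mulmx1.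
Qed.

Lemma sym_mul k (T1 T2 : 'M[R]_(k + k)) :
  symplectic T1 -> symplectic T2 -> symplectic (T1 *m T2).
Proof.
move=> [a1 b1] [a2 b2]; rewrite /symplectic sharp_mul; split.
  by rewrite mulmxA -[T1 *m T2 *m _]mulmxA a2 mulmx1 a1.
by rewrite mulmxA -[sharp T2 *m sharp T1 *m _]mulmxA b1 mulmx1 b2.
Qed.

Lemma sym_invmx k (T : 'M[R]_(k + k)) : symplectic T -> symplectic (invmx T).
Proof. by move=> hT; rewrite sym_inv // /symplectic sharpK; case: hT => a b. Qed.

Lemma sym_J k (T : 'M[R]_(k + k)) : symplectic T -> T *m Jmx k *m T^T = Jmx k.
Proof.
case=> h _; move: h; rewrite sharpE mulmxN => /(congr1 (fun M => - M *m Jmx k)).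
rewrite opprK !mulmxA -[T *m Jmx k *m T^T *m Jmx k *m Jmx k]mulmxA JJ mulmxN mulmx1.
by rewrite mulNmx mul1mx => /oppr_inj.
Qed.

End J.

Definition obsb (x : part) : bool := match x with Qa | Qb | Pa => true | _ => false end.
Definition ctlb (x : part) : bool := match x with Qa | Pa | Pb => true | _ => false end.

Lemma ctl_swp n k l (i : 'I_(n + n)) : ctlb (blk n k l (swp i)) = obsb (blk n k l i).
Proof.
rewrite /blk swp_lt swp_val; case h: (i < n)%N => /=.
  by rewrite addnK; case: ifP => //; case: ifP.
by case: ifP => //; case: ifP.
Qed.

Lemma obs_swp n k l (i : 'I_(n + n)) : obsb (blk n k l (swp i)) = ctlb (blk n k l i).
Proof. by rewrite -ctl_swp swpK. Qed.

Lemma zeroA_spec r c : zeroA r c -> (obsb r && ~~ obsb c) || (~~ ctlb r && ctlb c).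
Proof. by case: r; case: c. Qed.

Lemma zeroB_spec r : zeroB r -> ~~ ctlb r.
Proof. by case: r. Qed.

Lemma zeroC_spec r : zeroC r -> ~~ obsb r.
Proof. by case: r. Qed.

Section E.
Variables (R : realType) (n M k l : nat) (d1 d2 d3 : nat -> R).
Hypothesis hkl : (k + l <= n)%N.
Hypothesis hM : (k + l + k <= M)%N.
Hypothesis hd1 : forall i, (i < k)%N -> d1 i != 0.
Hypothesis hd2 : forall i, (i < l)%N -> d2 i != 0.
Hypothesis hd3 : forall i, (i < k)%N -> d3 i != 0.
Let E := kalmanE n M k l d1 d2 d3.

Lemma E_col0 (j : 'I_(n + n)) r : ~~ obsb (blk n k l j) -> E r j = 0.
Proof.
rewrite /E /kalmanE mxE /blk => hob.
have := ltn_ord j; have := ltn_ord r; move: hob.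
by repeat (case: ifP => ? //=); move=> *; lia.
Qed.

Lemma E_row (j : 'I_(n + n)) : obsb (blk n k l j) ->
  exists u : 'rV[R]_M, u *m E = delta_mx 0 j.
Proof.
have key : forall (r : 'I_M) d, d != 0 -> (forall c, E r c = (c == j)%:R * d) ->
    exists u : 'rV[R]_M, u *m E = delta_mx 0 j.
  move=> r d hd hr; exists (d^-1 *: delta_mx 0 r); rewrite -scalemxAl -rowE.
  apply/rowP => c; rewrite mxE [row r E 0 c]mxE hr mxE eqxx /=.
  by rewrite mulrCA mulVf // mulr1.
have hj := ltn_ord j.
rewrite /blk; case: ifP => h1; [case: ifP => h2; [|case: ifP => h3] | case: ifP => h2; [|case: ifP => h3]] => //= _.
- have hr : (j < M)%N by lia.
  apply: (key (Ordinal hr) (d1 j)); first exact: hd1.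
  move=> c; rewrite /E /kalmanE mxE /= h2.
  case: (c =P j) => [->|hc]; first by rewrite eqxx mul1r.
  by rewrite mul0r; case: eqP => // /val_inj.
- have hr : (j < M)%N by lia.
  apply: (key (Ordinal hr) (d2 (j - k))); first by apply: hd2; lia.
  move=> c; rewrite /E /kalmanE mxE /= h2 h3.
  case: (c =P j) => [->|hc]; first by rewrite eqxx mul1r.
  by rewrite mul0r; case: eqP => // /val_inj.
- have hr : (k + l + (j - n) < M)%N by lia.
  apply: (key (Ordinal hr) (d3 (j - n))); first by apply: hd3; lia.
  move=> c; rewrite /E /kalmanE mxE /=.
  rewrite ifF; last by lia.
  rewrite ifF; last by lia.
  rewrite ifT; last by lia.
  have -> : (k + l + (j - n) - (k + l) = j - n)%N by lia.
  have -> : (n + (j - n) = j)%N by lia.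
  case: (c =P j) => [->|hc]; first by rewrite eqxx mul1r.
  by rewrite mul0r; case: eqP => // /val_inj.
Qed.

End E.

Section Gen.
Variable R : realType.

Definition supp N (P : pred 'I_N) (v : 'cV[R]_N) := forall j, ~~ P j -> v j 0 = 0.

Lemma supp_mul N (P : pred 'I_N) (A : 'M[R]_N) v :
  (forall r c, ~~ P r -> P c -> A r c = 0) -> supp P v -> supp P (A *m v).
Proof.
move=> hA hv j hj; rewrite mxE big1 // => c _.
by case: (boolP (P c)) => hc; [rewrite hA // mul0r | rewrite hv // mulr0].
Qed.

Lemma supp_pow N (P : pred 'I_N) (A : 'M[R]_N) v i :
  (forall r c, ~~ P r -> P c -> A r c = 0) -> supp P v -> supp P (A ^+ i *m v).
Proof.
move=> hA hv; elim: i => [|i IH]; first by rewrite expr0 mul1mx.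
by rewrite exprS -mulmxE -mulmxA; apply: supp_mul.
Qed.

Lemma supp_rows N p (P : pred 'I_N) (A : 'M[R]_(N, p)) w :
  (forall r c, ~~ P r -> A r c = 0) -> supp P (A *m w).
Proof. by move=> hA j hj; rewrite mxE big1 // => c _; rewrite hA // mul0r. Qed.

Lemma supp_kill N q (P : pred 'I_N) (A : 'M[R]_(q, N)) v :
  (forall r c, P c -> A r c = 0) -> supp P v -> A *m v = 0.
Proof.
move=> hA hv; apply/matrixP => r c; rewrite ord1 !mxE big1 // => j _.
by case: (boolP (P j)) => hj; [rewrite hA // mul0r | rewrite hv ?mulr0].
Qed.

Lemma supp_sum N (P : pred 'I_N) (I : finType) (F : I -> 'cV[R]_N) :
  (forall i, supp P (F i)) -> supp P (\sum_i F i).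
Proof. by move=> hF j hj; rewrite summxE big1 // => i _; apply: hF. Qed.

Lemma supp_delta N (P : pred 'I_N) j : P j -> supp P (delta_mx j 0).
Proof.
move=> hj i hi; rewrite mxE; case: eqP => [e|]; last by rewrite andFb.
by move: hi; rewrite e hj.
Qed.

Lemma eT_mul N (i : 'I_N) (x : 'cV[R]_N) : x i 0 = 0 -> (delta_mx i 0 : 'cV[R]_N)^T *m x = 0.
Proof.
move=> h; rewrite trmx_delta; apply/matrixP => a b; rewrite !ord1 !mxE.
rewrite big1 // => j _; rewrite mxE.
by case e: (j == i); rewrite ?andbF ?mul0r // (eqP e) h mulr0.
Qed.

Lemma delta_col N p (A : 'M[R]_(p, N)) r c : (A *m (delta_mx c 0 : 'cV[R]_N)) r 0 = A r c.
Proof.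
rewrite mxE (bigD1 c) //= big1 => [|j hj]; first by rewrite !mxE !eqxx mulr1 addr0.
by rewrite mxE (negbTE hj) mulr0.
Qed.

Lemma mxcol_eq0 q m p (F : forall i : 'I_q, 'M[R]_(p, m)) :
  \mxcol_i F i = 0 <-> forall i, F i = 0.
Proof.
split => [h i|h].
  by rewrite -(@mxcolK _ _ (fun _ => p) _ F i) h submxcol0.
by rewrite (eq_mxcol h) mxcol0.
Qed.

Lemma obsv0 N q (A : 'M[R]_N) (C : 'M[R]_(q, N)) (v : 'cV[R]_N) :
  obsvmx A C *m v = 0 <-> forall i : 'I_N, C *m A ^+ i *m v = 0.
Proof. by rewrite /obsvmx mxcol_mul mxcol_eq0. Qed.

Lemma ctrb_mul N p (A : 'M[R]_N) (B : 'M[R]_(N, p)) (w : 'cV[R]_(\sum_(i < N) p)) :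
  ctrbmx A B *m w = \sum_(i < N) A ^+ i *m B *m submxcol w i.
Proof. by rewrite -{1}[w]submxcolK /ctrbmx mul_mxrow_mxcol. Qed.

Lemma CH_ker q N (A : 'M[R]_N) (C : 'M[R]_(q, N)) (v : 'cV[R]_N) :
  (forall i, (i < N)%N -> C *m A ^+ i *m v = 0) -> C *m A ^+ N *m v = 0.
Proof.
case: N A C v => [|N] A C v h; first by rewrite [C]thinmx0 !mul0mx.
have CH := Cayley_Hamilton A.
rewrite -[char_poly A]coefK poly_def rmorph_sum /= size_char_poly big_ord_recr /= in CH.
have lc : (char_poly A)`_N.+1 = 1.
  by have := char_poly_monic A; rewrite monicE /lead_coef size_char_poly => /eqP.
move: CH; rewrite horner_mxZ rmorphXn /= horner_mx_X lc scale1r => /(congr1 (fun X => C *m X *m v)).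
rewrite mulmx0 mul0mx mulmxDr mulmxDl mulmx_sumr mulmx_suml big1 ?add0r // => i _.
by rewrite horner_mxZ rmorphXn /= horner_mx_X -scalemxAr -scalemxAl h // scaler0.
Qed.

Lemma entry_subZ p q (A B : 'M[R]_(p, q)) c i j : (A - c *: B) i j = A i j - c * B i j.
Proof. by rewrite !mxE. Qed.

Lemma entry_opp p q (A : 'M[R]_(p, q)) i j : (- A) i j = - A i j.
Proof. by rewrite !mxE. Qed.

Lemma row0_mul p q r (A : 'M[R]_(p, q)) (B : 'M[R]_(q, r)) i j :
  (forall x, A i x = 0) -> (A *m B) i j = 0.
Proof. by move=> h; rewrite mxE big1 // => x _; rewrite h mul0r. Qed.

Lemma col0_mul p q r (A : 'M[R]_(p, q)) (B : 'M[R]_(q, r)) i j :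
  (forall x, B x j = 0) -> (A *m B) i j = 0.
Proof. by move=> h; rewrite mxE big1 // => x _; rewrite h mulr0. Qed.

Lemma rowE_entry p (v : 'cV[R]_p) (j : 'I_p) : ((delta_mx 0 j : 'rV[R]_p) *m v) 0 0 = v j 0.
Proof. by rewrite -rowE mxE. Qed.

Lemma FB_gen N p (A F : 'M[R]_N) (B : 'M[R]_(N, p)) (K : 'M[R]_(p, N)) :
  F = A + B *m K -> forall t (y : 'cV[R]_p), exists z : 'I_t.+1 -> 'cV[R]_p,
  F ^+ t *m B *m y = \sum_(i < t.+1) A ^+ i *m B *m z i.
Proof.
move=> hF; elim => [|t IH] y.
  by exists (fun _ => y); rewrite big_ord1 !expr0.
have [z hz] := IH y.
pose X := \sum_(i < t.+1) A ^+ i *m B *m z i.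
exists (fun i => if unlift ord0 i is Some j then z j else K *m X).
rewrite big_ord_recl /= unlift_none expr0 mul1mx.
under eq_bigr do rewrite liftK.
rewrite exprS -mulmxE -!mulmxA [F ^+ t *m (B *m y)]mulmxA hz -/X.
rewrite {1}hF mulmxDl mulmxA addrC; congr (_ + _).
rewrite /X mulmx_sumr; apply: eq_bigr => i _.
by rewrite /bump /= add1n exprS -mulmxE !mulmxA.
Qed.

Lemma trpow_gen N (A J : 'M[R]_N) : A^T *m J = - (J *m A) ->
  forall t, (A ^+ t)^T *m J = (-1) ^+ t *: (J *m A ^+ t).
Proof.
move=> h; elim => [|t IH]; first by rewrite !expr0 trmx1 mul1mx mulmx1 scale1r.
rewrite exprSr -mulmxE trmx_mul -mulmxA IH -scalemxAr mulmxA.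
rewrite [A^T *m _]mulmxA h mulNmx -mulmxA -[J *m A *m A ^+ t]mulmxA.
rewrite !mulmxE -exprS -exprSr.
by rewrite [(-1) ^+ t.+1]exprS mulN1r scaleNr scalerN.
Qed.

Lemma dual_gen N q t (A Jn : 'M[R]_N) (Jm : 'M[R]_q) (SC : 'M[R]_(N, q)) (y : 'cV[R]_q) :
  A^T *m Jn = - (Jn *m A) -> Jn *m Jn = - 1%:M ->
  Jn *m ((A ^+ t)^T *m (- (Jn *m SC *m Jm)) *m y)
  = (-1) ^+ t *: (A ^+ t *m SC *m (Jm *m y)).
Proof.
move=> hA hJ; rewrite mulmxN mulNmx mulmxN !mulmxA.
rewrite -[Jn *m (A ^+ t)^T *m Jn]mulmxA (trpow_gen hA) -scalemxAr mulmxA hJ mulNmx mul1mx.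
by rewrite -!scalemxAl !mulNmx scalerN opprK.
Qed.

Lemma conj_pow N (P A Q : 'M[R]_N) : Q *m P = 1%:M -> P *m Q = 1%:M ->
  forall i, (P *m A *m Q) ^+ i = P *m A ^+ i *m Q.
Proof.
move=> hQP hPQ; elim => [|i IH]; first by rewrite !expr0 mulmx1 hPQ.
rewrite exprS IH -mulmxE !mulmxA -[P *m A *m Q *m P]mulmxA hQP mulmx1.
by rewrite -[P *m A *m A ^+ i]mulmxA mulmxE -exprS.
Qed.

Lemma obsv_conj N q (P A Q : 'M[R]_N) (C0 : 'M[R]_(q, N)) :
  Q *m P = 1%:M -> P *m Q = 1%:M ->
  obsvmx (P *m A *m Q) (C0 *m Q) = obsvmx A C0 *m Q.
Proof.
move=> hQP hPQ; rewrite /obsvmx mxcol_mul; apply: eq_mxcol => i.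
by rewrite conj_pow // !mulmxA -[C0 *m Q *m P]mulmxA hQP mulmx1.
Qed.

End Gen.

Definition nobP n k l : pred 'I_(n + n) := fun j => ~~ obsb (blk n k l j).
Definition ctP n k l : pred 'I_(n + n) := fun j => ctlb (blk n k l j).

Section Core.
Variables (R : realType) (n m k l : nat) (d1 d2 d3 : nat -> R).
Local Notation N := (n + n)%N.
Local Notation M := (\sum_(i < n + n) (m + m))%N.
Hypothesis hn : (0 < n)%N.
Hypothesis hkl : (k + l <= n)%N.
Hypothesis hM : (k + l + k <= M)%N.
Hypothesis hd1 : forall i, (i < k)%N -> d1 i != 0.
Hypothesis hd2 : forall i, (i < l)%N -> d2 i != 0.
Hypothesis hd3 : forall i, (i < k)%N -> d3 i != 0.
Variables (Rh : 'M[R]_(n + n)) (Ch : 'M[R]_(m + m, n + n)) (S : 'M[R]_(m + m))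
  (G : 'M[R]_M).
Hypothesis hRh : Rh^T = Rh.
Hypothesis hS : S \in unitmx.
Hypothesis hG : G \in unitmx.
Local Notation E := (kalmanE n M k l d1 d2 d3).
Local Notation JR := (Jmx n *m Rh).
Hypothesis hobs : obsvmx JR Ch = G *m E.
Local Notation ob i := (obsb (blk n k l i)).
Local Notation ct i := (ctlb (blk n k l i)).
Local Notation nob := (@nobP n k l).
Local Notation Ah := (JR - 2^-1 *: (sharp Ch *m Ch)).
Local Notation Bh := (- (sharp Ch *m S)).

Lemma L1 (v : 'cV[R]_N) : supp nob v -> obsvmx JR Ch *m v = 0.
Proof.
move=> hv; rewrite hobs -mulmxA (@supp_kill _ _ _ nob E v) ?mulmx0 //.
by move=> r c hc; apply: E_col0.
Qed.

Lemma L2 (v : 'cV[R]_N) : obsvmx JR Ch *m v = 0 -> forall j : 'I_N, ob j -> v j 0 = 0.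
Proof.
move=> h j hj.
have hE : E *m v = 0.
  by rewrite -[E *m v]mul1mx -(mulVmx hG) -!mulmxA [G *m (E *m v)]mulmxA -hobs h mulmx0.
have [u hu] := E_row hkl hM hd1 hd2 hd3 hj.
by rewrite -rowE_entry -hu -mulmxA hE mulmx0 mxE.
Qed.

Lemma L3 (v : 'cV[R]_N) : supp nob v -> supp nob (JR *m v).
Proof.
move=> hv.
have hv' := L1 hv; move/obsv0: hv' => hv'.
have H : obsvmx JR Ch *m (JR *m v) = 0.
  apply/obsv0 => i; rewrite mulmxA -[Ch *m JR ^+ i *m JR]mulmxA mulmxE -exprSr -mulmxE.
  have [hi|hi] := ltnP i.+1 N.
    exact: (hv' (Ordinal hi)).
  have -> : i.+1 = N by have := ltn_ord i; lia.
  by apply: CH_ker => t ht; apply: (hv' (Ordinal ht)).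
by move=> j; rewrite negbK; apply: L2.
Qed.

Lemma L4 (i j : 'I_N) : ob i -> ~~ ob j -> JR i j = 0.
Proof.
move=> hi hj; rewrite -(delta_col JR i j).
move: (L3 (@supp_delta R _ nob j hj)) => H; apply: H; by rewrite /nobP negbK.
Qed.

Lemma L5 (i j : 'I_N) : ~~ ct i -> ct j -> JR i j = 0.
Proof.
move=> hi hj.
have h1 : JR (swp j) (swp i) = 0 by apply: L4; rewrite obs_swp.
have h2 : Rh j (swp i) = 0.
  move: h1; rewrite mulJmx swpK; case: ifP => _ //; by move/eqP; rewrite oppr_eq0 => /eqP.
rewrite mulJmx; have -> : Rh (swp i) j = Rh j (swp i) by rewrite -[in LHS]hRh mxE.
by rewrite h2 oppr0; case: ifP.
Qed.

Lemma L6 (r : 'I_(m + m)) (j : 'I_N) : ~~ ob j -> Ch r j = 0.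
Proof.
move=> hj; have hN : (0 < N)%N by lia.
have /obsv0 h := L1 (@supp_delta R _ nob j hj).
have := h (Ordinal hN); rewrite expr0 mulmx1 => /matrixP /(_ r 0).
by rewrite delta_col mxE.
Qed.

Lemma L7 (i : 'I_N) (x : 'I_(m + m)) : ~~ ct i -> sharp Ch i x = 0.
Proof.
move=> hi; rewrite sharpE entry_opp mulmxJ mulJmx !mxE L6 ?obs_swp //.
by case: ifP; case: ifP; rewrite ?oppr0.
Qed.

Lemma L8 (i j : 'I_N) : ~~ ct i || ~~ ob j -> (sharp Ch *m Ch) i j = 0.
Proof.
case/orP => h; first by apply: row0_mul => x; apply: L7.
by apply: col0_mul => x; apply: L6.
Qed.

Lemma L9 (i j : 'I_N) : (ob i && ~~ ob j) || (~~ ct i && ct j) -> Ah i j = 0.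
Proof.
move=> h; rewrite entry_subZ L8; last first.
  by case/orP: h => /andP [h1 h2]; [rewrite h2 orbT | rewrite h1].
rewrite mulr0 subr0; case/orP: h => /andP [h1 h2]; [exact: L4 | exact: L5].
Qed.

Lemma L10 (i : 'I_N) (j : 'I_(m + m)) : ~~ ct i -> Bh i j = 0.
Proof. by move=> h; rewrite entry_opp row0_mul ?oppr0 // => x; apply: L7. Qed.

Lemma Q1 (i : 'I_N) : ~~ ob i -> in_unobservable Ah Ch (evec i).
Proof.
move=> hi; rewrite /in_unobservable /evec; apply/obsv0 => t; rewrite -mulmxA.
apply: (@supp_kill _ _ _ nob) => [r c hc|]; first exact: L6.
apply: supp_pow; last exact: (@supp_delta R _ nob i hi).
move=> r c hr hc; apply: L9; rewrite /nobP negbK in hr; rewrite /nobP in hc; by rewrite hr hc.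
Qed.

Lemma Q2 (i : 'I_N) : ob i -> in_observable Ah Ch (evec i).
Proof.
move=> hi w /obsv0 hw; rewrite /evec; apply: eT_mul; apply: (L2 _ hi).
have e : forall X : 'cV[R]_N, JR *m X = Ah *m X + 2^-1 *: (sharp Ch *m (Ch *m X)).
  by move=> X; rewrite mulmxBl -scalemxAl !mulmxA subrK.
have key : forall t, (t < N)%N -> JR ^+ t *m w = Ah ^+ t *m w.
  elim => [|t IH] ht; first by rewrite !expr0.
  rewrite exprS -mulmxE -mulmxA IH; last by lia.
  have hw' := hw (Ordinal (ltnW ht)); rewrite /= in hw'.
  rewrite e mulmxA [Ch *m (Ah ^+ t *m w)]mulmxA hw' mulmx0 scaler0 addr0.
  by rewrite mulmxE -exprS.
apply/obsv0 => t; rewrite -mulmxA key // mulmxA; exact: hw.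
Qed.

Lemma K1 (i : 'I_N) : ~~ ct i -> in_uncontrollable Ah Bh (evec i).
Proof.
move=> hi w; rewrite /evec; apply: eT_mul; rewrite ctrb_mul.
have : supp (@ctP n k l) (\sum_(t < N) Ah ^+ t *m Bh *m submxcol w t).
  apply: supp_sum => t; rewrite -mulmxA; apply: supp_pow.
    by move=> r c hr hc; apply: L9; rewrite /ctP in hr hc; rewrite hr hc orbT.
  by apply: supp_rows => r c hr; apply: L10.
by move/(_ i hi).
Qed.

Local Notation inC := (in_controllable Ah Bh).

Lemma C_add x y : inC x -> inC y -> inC (x + y).
Proof. by move=> [w1 ->] [w2 ->]; exists (w1 + w2); rewrite mulmxDr. Qed.

Lemma C_scale c x : inC x -> inC (c *: x).
Proof. by move=> [w ->]; exists (c *: w); rewrite scalemxAr. Qed.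

Lemma C_sum (I : finType) (P : pred I) (F : I -> 'cV[R]_N) :
  (forall i, P i -> inC (F i)) -> inC (\sum_(i | P i) F i).
Proof.
move=> hF; apply: (big_ind inC) => //; last exact: C_add.
by exists 0; rewrite mulmx0.
Qed.

Lemma C_term t (ht : (t < N)%N) (z : 'cV[R]_(m + m)) : inC (Ah ^+ t *m Bh *m z).
Proof.
exists (\mxcol_(i < N) (if i == Ordinal ht then z else 0)).
rewrite ctrb_mul (bigD1 (Ordinal ht)) //= big1 ?addr0.
  by rewrite (@mxcolK _ _ (fun _ => (m + m)%N)) eqxx.
move=> i hi; rewrite (@mxcolK _ _ (fun _ => (m + m)%N)) (negbTE hi) mulmx0 //.
Qed.

Lemma hJR : JR = Ah + Bh *m (- (2^-1) *: (invmx S *m Ch)).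
Proof.
have hBK : Bh *m (- (2^-1) *: (invmx S *m Ch)) = 2^-1 *: (sharp Ch *m Ch).
  rewrite mulNmx -!scalemxAr scaleNr opprK mulmxA -[sharp Ch *m S *m invmx S]mulmxA.
  by rewrite mulmxV // mulmx1.
by rewrite hBK subrK.
Qed.

Lemma C_JR t (ht : (t < N)%N) (y : 'cV[R]_(m + m)) : inC (JR ^+ t *m Bh *m y).
Proof.
have [z ->] := FB_gen hJR t y; apply: C_sum => i _.
have hi : (i < N)%N by have := ltn_ord i; lia.
exact: (C_term hi).
Qed.

Lemma trJR : JR^T *m Jmx n = - (Jmx n *m JR).
Proof.
rewrite trmx_mul hRh Jtr mulmxN mulNmx -mulmxA JJ mulmxN mulmx1 opprK.
by rewrite mulmxA JJ mulNmx mul1mx opprK.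
Qed.

Lemma trJRpow t : (JR ^+ t)^T *m Jmx n = (-1) ^+ t *: (Jmx n *m JR ^+ t).
Proof. exact: (trpow_gen trJR). Qed.

Lemma ChT : Ch^T = - (Jmx n *m sharp Ch *m Jmx m).
Proof.
rewrite sharpE mulmxN mulNmx opprK !mulmxA JJ !mulNmx mul1mx -mulmxA JJ.
by rewrite mulmxN mulmx1 opprK.
Qed.

Lemma K2 (i : 'I_N) : ct i -> inC (evec i).
Proof.
move=> hi; have hs : ob (swp i) by rewrite obs_swp.
have [u hu] := E_row hkl hM hd1 hd2 hd3 hs.
pose u' := u *m invmx G.
have h1 : u' *m obsvmx JR Ch = delta_mx 0 (swp i).
  by rewrite /u' hobs mulmxA -[u *m invmx G *m G]mulmxA mulVmx // mulmx1.
have h2 : \sum_(t < N) submxrow u' t *m (Ch *m JR ^+ t) = delta_mx 0 (swp i).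
  by rewrite -h1 -{2}[u'](@submxrowK _ _ (fun _ => (m + m)%N)) /obsvmx mul_mxrow_mxcol.
have h3 : \sum_(t < N) (JR ^+ t)^T *m Ch^T *m (submxrow u' t)^T = delta_mx (swp i) 0.
  by rewrite -trmx_delta -h2 linear_sum /=; apply: eq_bigr => t _; rewrite !trmx_mul.
have h4 : forall (t : 'I_N) (y : 'cV[R]_(m + m)),
    inC (Jmx n *m ((JR ^+ t)^T *m Ch^T *m y)).
  move=> t y.
  have := @dual_gen R _ _ t JR (Jmx n) (Jmx m) (sharp Ch) y trJR (JJ R n); rewrite -ChT => ->.
  apply: C_scale.
  have -> : JR ^+ t *m sharp Ch *m (Jmx m *m y)
      = JR ^+ t *m Bh *m (- (invmx S *m (Jmx m *m y))).
    rewrite -[LHS]mulmxA -[RHS]mulmxA; congr (_ *m _).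
    rewrite [in RHS]mulNmx [in RHS]mulmxN opprK -[in RHS]mulmxA [S *m _]mulmxA mulmxV // mul1mx //.
  exact: C_JR.
have h5 : inC (Jmx n *m delta_mx (swp i) 0).
  by rewrite -h3 mulmx_sumr; apply: C_sum => t _; apply: h4.
pose c : R := if (i < n)%N then 1 else -1.
have h6 : Jmx n *m delta_mx (swp i) 0 = c *: evec i.
  apply/matrixP => r z; rewrite ord1 mulJmx !mxE /c (inj_eq (can_inj (@swpK n))).
  case: (r =P i) => [->|hr]; first by rewrite eqxx /=; case: ifP; rewrite ?mulr1 ?mulrN1.
  by rewrite /= mulr0; case: ifP; rewrite ?mulr0n ?oppr0.
have -> : evec i = c *: (Jmx n *m delta_mx (swp i) 0).
  by rewrite h6 scalerA /c; case: ifP; rewrite ?mulr1 ?mulrNN ?mulr1 scale1r.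
exact: C_scale.
Qed.

Theorem core_all :
  [/\ (forall i : 'I_(n + n),
         match blk n k l i with
         | Qa | Pa => in_controllable Ah Bh (evec i)
                      /\ in_observable Ah Ch (evec i)
         | Pb => in_controllable Ah Bh (evec i)
                 /\ in_unobservable Ah Ch (evec i)
         | Qb => in_uncontrollable Ah Bh (evec i)
                 /\ in_observable Ah Ch (evec i)
         | Qc | Pc => in_uncontrollable Ah Bh (evec i)
                      /\ in_unobservable Ah Ch (evec i)
         end),
      (forall i j : 'I_(n + n),
         zeroA (blk n k l i) (blk n k l j) -> Ah i j = 0),
      (forall (i : 'I_(n + n)) (j : 'I_(m + m)),
         zeroB (blk n k l i) -> Bh i j = 0) &
      (forall (i : 'I_(m + m)) (j : 'I_(n + n)),
         zeroC (blk n k l j) -> Ch i j = 0)].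
Proof.
split.
- move=> i; case e: (blk n k l i).
  + by split; [apply: K2 | apply: Q2]; rewrite e.
  + by split; [apply: K1 | apply: Q2]; rewrite e.
  + by split; [apply: K1 | apply: Q1]; rewrite e.
  + by split; [apply: K2 | apply: Q2]; rewrite e.
  + by split; [apply: K2 | apply: Q1]; rewrite e.
  + by split; [apply: K1 | apply: Q1]; rewrite e.
- by move=> i j /zeroA_spec; apply: L9.
- by move=> i j /zeroB_spec; apply: L10.
- by move=> i j /zeroC_spec; apply: L6.
Qed.

End Core.

Unset Implicit Arguments. Set Strict Implicit.


Theorem corollary1 (R : realType) (n m : nat) (hn : (0 < n)%N) (hm : (0 < m)%N)
  (Rm : 'M[R]_(n + n)) (C : 'M[R]_(m + m, n + n)) (Sigma : 'M[R]_(m + m))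
  (hRsym : Rm^T = Rm) (hSigma : symplectic Sigma)
  (k l : nat) (hkl : (k + l <= n)%N)
  (Q : 'M[R]_(\sum_(i < n + n) (m + m)))
  (Z : 'M[R]_(n + n)) (xi : nat -> R)
  (hQ : orthogonal_mx Q) (hZ : symplectic Z)
  (hxi : forall i, (i < k)%N -> 0 < xi i)
  (hfact : obsvmx (Jmx n *m Rm) C
           = Q *m kalmanE n (\sum_(i < n + n) (m + m)) k l xi (fun _ => 1) xi
               *m invmx Z)
  (X : 'M[R]_(\sum_(i < n + n) (m + m))) (Y : 'M[R]_(n + n))
  (d1 d2 d3 : nat -> R)
  (hX : X \in unitmx) (hY : symplectic Y)
  (hd1 : forall i, (i < k)%N -> d1 i != 0)
  (hd2 : forall i, (i < l)%N -> d2 i != 0)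
  (hd3 : forall i, (i < k)%N -> d3 i != 0)
  (hXEY : X *m kalmanE n (\sum_(i < n + n) (m + m)) k l xi (fun _ => 1) xi *m Y
          = kalmanE n (\sum_(i < n + n) (m + m)) k l d1 d2 d3) :
  let A := Jmx n *m Rm - 2^-1 *: (sharp C *m C) in
  let B := - (sharp C *m Sigma) in
  let V := invmx Z in
  let V' := invmx Y *m V in
  let Ahat := V' *m A *m invmx V' in
  let Bhat := V' *m B in
  let Chat := C *m invmx V' in
  [/\ symplectic V',
      (forall i : 'I_(n + n),
         match blk n k l i with
         | Qa | Pa => in_controllable Ahat Bhat (evec i)
                      /\ in_observable Ahat Chat (evec i)
         | Pb => in_controllable Ahat Bhat (evec i)
                 /\ in_unobservable Ahat Chat (evec i)
         | Qb => in_uncontrollable Ahat Bhat (evec i)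
                 /\ in_observable Ahat Chat (evec i)
         | Qc | Pc => in_uncontrollable Ahat Bhat (evec i)
                      /\ in_unobservable Ahat Chat (evec i)
         end),
      (forall i j : 'I_(n + n),
         zeroA (blk n k l i) (blk n k l j) -> Ahat i j = 0),
      (forall (i : 'I_(n + n)) (j : 'I_(m + m)),
         zeroB (blk n k l i) -> Bhat i j = 0) &
      (forall (i : 'I_(m + m)) (j : 'I_(n + n)),
         zeroC (blk n k l j) -> Chat i j = 0)].
Proof.
move=> A B V V' Ahat Bhat Chat.
have [W eW] : exists W, W = Z *m Y by exists (Z *m Y).
have hW : symplectic W by rewrite eW; exact: sym_mul.
have hWu := sym_unit hW.
have hZu := sym_unit hZ.
have hYu := sym_unit hY.
have h0 : V' *m W = 1%:M.
  rewrite /V' /V eW mulmxA -[invmx Y *m invmx Z *m Z]mulmxA mulVmx // mulmx1.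
  exact: mulVmx.
have eV' : V' = invmx W by rewrite -[V']mulmx1 -(mulmxV hWu) mulmxA h0 mul1mx.
have hVW : V' *m W = 1%:M by [].
have hWV : W *m V' = 1%:M by rewrite eV' mulmxV.
have hV' : symplectic V' by rewrite eV'; apply: sym_invmx.
have eiV : invmx V' = W by rewrite eV' invmxK.
have hVs : V' = sharp W by rewrite eV' sym_inv.
have VJ : V' *m Jmx n = Jmx n *m W^T.
  by rewrite -{1}(sym_J hW) mulmxA mulmxA hVW mul1mx.
pose Rh := W^T *m Rm *m W.
pose Ch := C *m W.
have hRh : Rh^T = Rh by rewrite /Rh !trmx_mul trmxK hRsym mulmxA.
have JRh : V' *m (Jmx n *m Rm) *m W = Jmx n *m Rh by rewrite mulmxA VJ /Rh !mulmxA.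
have sCh : sharp Ch = V' *m sharp C by rewrite /Ch sharp_mul -hVs.
have eA : Ahat = Jmx n *m Rh - 2^-1 *: (sharp Ch *m Ch).
  rewrite /Ahat /A eiV mulmxBr mulmxBl JRh -scalemxAr -scalemxAl sCh /Ch !mulmxA.
  done.
have eB : Bhat = - (sharp Ch *m Sigma) by rewrite /Bhat /B sCh mulmxN mulmxA.
have eC : Chat = Ch by rewrite /Chat eiV.
have hobs' : obsvmx (Jmx n *m Rh) Ch
    = (Q *m invmx X) *m kalmanE n (\sum_(i < n + n) (m + m)) k l d1 d2 d3.
  rewrite -JRh /Ch obsv_conj // hfact -hXEY eW.
  rewrite !mulmxA -[Q *m _ *m invmx Z *m Z]mulmxA mulVmx // mulmx1.
  by rewrite -[Q *m invmx X *m X]mulmxA mulVmx // mulmx1.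
have hG : Q *m invmx X \in unitmx.
  have [_ hQu] := mulmx1_unit hQ.
  by rewrite unitmx_mul unitmx_inv hX hQu.
have hS := sym_unit hSigma.
have hM : (k + l + k <= \sum_(i < n + n) (m + m))%N.
  rewrite sum_nat_const card_ord.
  have : (n + n <= (n + n) * (m + m))%N by rewrite leq_pmulr // addn_gt0 hm.
  lia.
have := core_all hn hkl hM hd1 hd2 hd3 hRh hS hG hobs'.
rewrite -eA -eB -eC => -[h1 h2 h3 h4].
by split.
Qed.
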